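(* Assume $n>3t+2d$. In any execution of Algorithm 1, if a correct process $p_i$ mbrb-broadcasts $(m,sn)$, then at least $$c-d-\left\lfloor\frac{d\,\lfloor\frac{n+t}{2}\rfloor}{c-d-\lfloor\frac{n+t}{2}\rfloor}\right\rfloor$$ correct processes mbrb-deliver $(m,sn,i)$ at most two communication steps after the mbrb-broadcast.
   Context: System model. There are $n$ asynchronous processes $p_1,\dots,p_n$ with distinct known identities. Up to $t$ are Byzantine (arbitrary behavior); the rest are correct; $c$ is the number of correct processes in the execution, $n-t\le c\le n$. The network is fully connected, asynchronous, never corrupts/duplicates/creates messages; ''broadcast $M$'' sends $M$ to all $n$ processes; a message adversary may suppress, per broadcast by a correct process, up to $d$ ($0\le d<c$) copies addressed to correct processes, all other copies among correct processes being received. Signatures are unforgeable and public keys are known. Time is measured in communication steps: local computation takes zero time and every imp-message has the same transfer delay of one step. Algorithm 1 (code for $p_i$). Each process stores, for each triplet $(m,sn,j)$, a set of saved valid signatures of that triplet, at most one per signer. On $\mathrm{mbrb\_broadcast}(m,sn)$: $p_i$ saves its own signature of $(m,sn,i)$ and broadcasts $\mathrm{BUNDLE}(m,sn,i,S)$, $S$ the saved signatures for $(m,sn,i)$. On receiving $\mathrm{BUNDLE}(m,sn,j,sigs)$: if $p_i$ has not already mbrb-delivered some $(-,sn,j)$ and $sigs$ contains a valid signature of $(m,sn,j)$ by $p_j$, then: (1) save all new valid signatures of $(m,sn,j)$ in $sigs$; (2) if $p_i$ has not yet signed any $(-,sn,j)$, save its own signature of $(m,sn,j)$ and broadcast $\mathrm{BUNDLE}(m,sn,j,\text{all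 saved signatures for }(m,sn,j))$; (3) if strictly more than $\frac{n+t}{2}$ signatures for $(m,sn,j)$ are saved, broadcast $\mathrm{BUNDLE}(m,sn,j,\text{all saved signatures})$ and mbrb-deliver $(m,sn,j)$. A correct process never uses the same sequence number twice. *)

(* Defs.v *)
(* Model of Algorithm 1 (signature-based MBRB) executed
   under the "one communication step per message" timing model. *)
From mathcomp Require Import all_boot.
Set Implicit Arguments. Unset Strict Implicit. Unset Printing Implicit Defensive.

Section Algorithm1.
Variable M : eqType.
Variable n t : nat.        (* processes p_0 .. p_(n-1); fault bound t *)

Definition triplet := (M * nat * 'I_n)%type.
(* an (unforgeable) signature: the signed triplet and the signer's identity *)
Definition sig := (triplet * 'I_n)%type.
Definition msg := (M * nat * 'I_n * seq sig)%type.
Definition msg_sigs (mg : msg) : seq sig := mg.2.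

Inductive event := Recv of msg | Bcast of M & nat.

Record lstate := LState {
  saved : seq sig;
  signed : seq (nat * 'I_n);       (* pairs (sn, j) for which it signed some (-,sn,j) *)
  delivered : seq triplet }.

Definition init_state := LState [::] [::] [::].

Definition add_sig (s : sig) (l : seq sig) := if s \in l then l else rcons l s.
Definition sigs_for (l : seq sig) (x : triplet) := [seq s <- l | s.1 == x].

(* one atomic (zero-time) step of Algorithm 1 at process p_i:
   returns new state, broadcast messages (in order), delivered triplets *)
Definition step (i : 'I_n) (st : lstate) (ev : event)
  : lstate * seq msg * seq triplet :=
  match ev with
  | Bcast m sn =>
      let x : triplet := (m, sn, i) in
      let sv := add_sig (x, i) (saved st) in
      (LState sv ((sn, i) :: signed st) (delivered st),
       [:: (m, sn, i, sigs_for sv x)], [::])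
  | Recv mg =>
      let: (m, sn, j, Sg) := mg in
      let x : triplet := (m, sn, j) in
      if ~~ has (fun y : triplet => (y.1.2 == sn) && (y.2 == j)) (delivered st)
         && ((x, j) \in Sg) then
        let sv1 := saved st ++ undup [seq s <- Sg | (s.1 == x) && (s \notin saved st)] in
        let already := (sn, j) \in signed st in
        let sv2 := if already then sv1 else add_sig (x, i) sv1 in
        let sg2 := if already then signed st else (sn, j) :: signed st in
        let out1 : seq msg := if already then [::] else [:: (m, sn, j, sigs_for sv2 x)] in
        (* (3) strictly more than (n+t)/2 signatures: broadcast and deliver *)
        if n + t < 2 * size (sigs_for sv2 x) then
          (LState sv2 sg2 (rcons (delivered st) x),
           out1 ++ [:: (m, sn, j, sigs_for sv2 x)], [:: x])
        else (LState sv2 sg2 (delivered st), out1, [::])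
      else (st, [::], [::])
  end.

(* processing a sequence of events, in order, within one time instant *)
Fixpoint run (i : 'I_n) (st : lstate) (evs : seq event)
  : lstate * seq msg * seq triplet :=
  match evs with
  | [::] => (st, [::], [::])
  | e :: es =>
      let: (st1, o1, d1) := step i st e in
      let: (st2, o2, d2) := run i st1 es in
      (st2, o1 ++ o2, d1 ++ d2)
  end.

(* inp p tau : the events processed by process p at time tau, in order *)
Definition inputs := 'I_n -> nat -> seq event.

Fixpoint state_at (inp : inputs) (p : 'I_n) (tau : nat) : lstate :=
  match tau with
  | 0 => init_state
  | tau'.+1 => (run p (state_at inp p tau') (inp p tau')).1.1
  end.

Definition outs (inp : inputs) (p : 'I_n) (tau : nat) : seq msg :=
  (run p (state_at inp p tau) (inp p tau)).1.2.
Definition dels (inp : inputs) (p : 'I_n) (tau : nat) : seq triplet :=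
  (run p (state_at inp p tau) (inp p tau)).2.

Definition recvs (inp : inputs) (p : 'I_n) (tau : nat) : seq msg :=
  pmap (fun e => if e is Recv mg then Some mg else None) (inp p tau).
Definition bcasts (inp : inputs) (p : 'I_n) (tau : nat) : seq (M * nat) :=
  pmap (fun e => if e is Bcast m sn then Some (m, sn) else None) (inp p tau).

(* byz tau b q : messages sent by (Byzantine) b to q at time tau;
   supp p tau k : correct recipients whose copy of the k-th broadcast of
   p at time tau is suppressed by the message adversary. *)
Definition byz_sends := nat -> 'I_n -> 'I_n -> seq msg.
Definition suppression := 'I_n -> nat -> nat -> {set 'I_n}.

(* multiset of messages sent to q at time tau that q receives (at tau+1) *)
Definition sent_to (C : {set 'I_n}) (inp : inputs) (byz : byz_sends)
    (supp : suppression) (q : 'I_n) (tau : nat) : seq msg :=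
  flatten [seq (if p \in C then
                  [seq km.2 | km <- zip (iota 0 (size (outs inp p tau))) (outs inp p tau)
                            & q \notin supp p tau km.1]
                else byz tau p q) | p <- enum 'I_n].

(* An execution of Algorithm 1 with correct set C, message adversary of
   power d, where every message takes exactly one communication step. *)
Definition execution (C : {set 'I_n}) (d : nat) (inp : inputs)
    (byz : byz_sends) (supp : suppression) : Prop :=
  [/\
      forall p tau k, supp p tau k \subset C /\ #|supp p tau k| <= d,
      forall q, q \in C -> recvs inp q 0 = [::],
      forall q tau, q \in C -> perm_eq (recvs inp q tau.+1) (sent_to C inp byz supp q tau),
      (* unforgeability: a Byzantine process can only use a signature of a
         correct signer after having received it in an earlier broadcast *)
      forall tau b q mg s, b \notin C -> mg \in byz tau b q -> s \in msg_sigs mg ->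
        s.2 \in C ->
        exists tau' p mg', [/\ tau' < tau, p \in C, mg' \in outs inp p tau'
                             & s \in msg_sigs mg']
    & (* a correct process never uses the same sequence number twice *)
      forall p T, p \in C -> uniq [seq ms.2 | ms <- flatten [seq bcasts inp p tau | tau <- iota 0 T]]
  ].

End Algorithm1.

(* Main.v *)
Require Import Defs.
From mathcomp Require Import all_boot.
From mathcomp Require Import zify.
Set Implicit Arguments. Unset Strict Implicit. Unset Printing Implicit Defensive.
Section Gen.
Variable M : eqType.
Variable n t : nat.
Implicit Types (s z : sig M n) (l : seq (sig M n)) (st : lstate M n) (e : event M n) (mg : msg M n) (evs : seq (event M n)).
Definition acc st mg := ~~ has (fun y : triplet M n => (y.1.2 == mg.1.1.2) && (y.2 == mg.1.2)) (delivered st)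
   && ((mg.1, mg.1.2) \in mg.2).
Definition sv1 st mg := saved st ++ undup [seq s <- mg.2 | (s.1 == mg.1) && (s \notin saved st)].
Definition alr st mg := (mg.1.1.2, mg.1.2) \in signed st.
Definition sv2 (p : 'I_n) st mg := if alr st mg then sv1 st mg else add_sig (mg.1, p) (sv1 st mg).
Definition thr p st mg := n + t < 2 * size (sigs_for (sv2 p st mg) mg.1).

Lemma step_recv p st mg : step t p st (Recv mg) =
  if acc st mg then
   (LState (sv2 p st mg) (if alr st mg then signed st else (mg.1.1.2, mg.1.2) :: signed st)
      (if thr p st mg then rcons (delivered st) mg.1 else delivered st),
    (if alr st mg then [::] else [:: (mg.1, sigs_for (sv2 p st mg) mg.1)]) ++
      (if thr p st mg then [:: (mg.1, sigs_for (sv2 p st mg) mg.1)] else [::]),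
    if thr p st mg then [:: mg.1] else [::])
  else (st, [::], [::]).
Proof.
case: mg => [[[m0 sn0] j] Sg].
rewrite /acc /thr /sv2 /alr /sv1 /=.
case: ifP => // _.
by case: ifP => _; case: ifP => _; rewrite ?cats0.
Qed.

Lemma add_sigE s l : s \in add_sig s l.
Proof. by rewrite /add_sig; case: ifP => // _; rewrite mem_rcons mem_head. Qed.
Lemma add_sig_sub s l : {subset l <= add_sig s l}.
Proof. by move=> z; rewrite /add_sig; case: ifP => // _; rewrite mem_rcons inE => ->; rewrite orbT. Qed.
Lemma mem_add_sig s l z : z \in add_sig s l -> z = s \/ z \in l.
Proof. by rewrite /add_sig; case: ifP => _ //; [right | rewrite mem_rcons inE => /orP [/eqP|]; auto]. Qed.
Lemma sv1_sub st mg : {subset saved st <= sv1 st mg}.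
Proof. by move=> z; rewrite /sv1 mem_cat => ->. Qed.
Lemma sv2_sub p st mg : {subset saved st <= sv2 p st mg}.
Proof. by move=> z Hz; rewrite /sv2; case: ifP => _; [|apply: add_sig_sub]; apply: sv1_sub. Qed.
Lemma mem_sv2 p st mg z : z \in sv2 p st mg ->
  z \in saved st \/ (z.1 = mg.1 /\ (z \in mg.2 \/ z.2 = p)).
Proof.
rewrite /sv2 => H.
have H1 : z \in sv1 st mg -> z \in saved st \/ (z.1 = mg.1 /\ (z \in mg.2 \/ z.2 = p)).
  rewrite /sv1 mem_cat mem_undup mem_filter => /orP [-> |/andP [/andP [/eqP -> _] ->]]; auto.
case: ifP H => _ H; first by apply: H1.
case: (mem_add_sig H) => [-> | ]; last by apply: H1.
by right; split; auto.
Qed.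

Lemma run_cons p st e evs : run t p st (e :: evs) =
  ((run t p (step t p st e).1.1 evs).1.1, (step t p st e).1.2 ++ (run t p (step t p st e).1.1 evs).1.2,
   (step t p st e).2 ++ (run t p (step t p st e).1.1 evs).2).
Proof.
rewrite /=; case: (step t p st e) => [[st1 o1] d1] /=.
by case: (run t p st1 evs) => [[st2 o2] d2].
Qed.

Lemma step_saved_sub p st e : {subset saved st <= saved (step t p st e).1.1}.
Proof.
case: e => [mg | m0 sn0]; last by move=> z /= Hz; apply: add_sig_sub.
rewrite step_recv; case: ifP => _ /= z Hz //; exact: sv2_sub.
Qed.
Lemma step_signed_sub p st e : {subset signed st <= signed (step t p st e).1.1}.
Proof.
case: e => [mg | m0 sn0]; last by move=> z /= Hz; rewrite inE Hz orbT.
rewrite step_recv; case: ifP => _ /= z Hz //; case: ifP => _ //; by rewrite inE Hz orbT.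
Qed.
Lemma step_deliv p st e : delivered (step t p st e).1.1 = delivered st ++ (step t p st e).2.
Proof.
case: e => [mg | m0 sn0]; last by rewrite /= cats0.
rewrite step_recv; case: ifP => _ /=; last by rewrite cats0.
by case: ifP => _; rewrite ?cats1 ?cats0.
Qed.
Lemma step_dels p st e y : y \in (step t p st e).2 ->
  exists mg, [/\ e = Recv mg, mg.1 = y & (y, y.2) \in mg.2].
Proof.
case: e => [mg | m0 sn0] //.
rewrite step_recv; case: ifP => //= /andP [_ Hs]; case: ifP => // _.
by rewrite inE => /eqP ->; exists mg.
Qed.
Lemma step_outs p st e mg : mg \in (step t p st e).1.2 -> {subset mg.2 <= saved (step t p st e).1.1}.
Proof.
case: e => [mg0 | m0 sn0].
  rewrite step_recv; case: ifP => //= _.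
  have H : forall l, mg = (mg0.1, sigs_for l mg0.1) -> {subset mg.2 <= l}.
    by move=> l -> z /=; rewrite mem_filter => /andP [].
  rewrite mem_cat; case: ifP => _; case: ifP => _ //=; by rewrite ?in_nil ?orbF ?orbb mem_seq1 => /eqP /H.
rewrite /= inE => /eqP -> z /=; by rewrite mem_filter => /andP [_ ->].
Qed.
Lemma step_saved_new p st e s : s \in saved (step t p st e).1.1 ->
  s \in saved st \/ (exists mg, [/\ e = Recv mg, mg.1 = s.1 & (s.1, s.1.2) \in mg.2]) \/
  (s.1.2 = p /\ e = Bcast n s.1.1.1 s.1.1.2).
Proof.
case: e => [mg | m0 sn0].
  rewrite step_recv; case: ifP => /= [/andP [_ Ha]|_]; last by left.
  case/mem_sv2 => [|[Hs _]]; first by left.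
  by right; left; exists mg; rewrite Hs.
move=> /= /mem_add_sig [-> /= | ]; last by left.
by right; right.
Qed.
Lemma step_signed_new p st e sn' j : (sn', j) \in signed (step t p st e).1.1 ->
  (sn', j) \in signed st \/ (exists mg, [/\ e = Recv mg, mg.1.1.2 = sn', mg.1.2 = j & (mg.1, j) \in mg.2]) \/
  (j = p /\ exists m', e = Bcast n m' sn').
Proof.
case: e => [mg | m0 sn0].
  rewrite step_recv; case: ifP => /= [/andP [_ Ha]|_]; last by left.
  case: ifP => _; first by left.
  rewrite inE => /orP [/eqP [-> ->] | ]; last by left.
  by right; left; exists mg.
rewrite /= inE => /orP [/eqP [-> ->] | ]; last by left.
by right; right; split => //; exists m0.
Qed.
Lemma step_bcast p st m0 sn0 :
  let x := (m0, sn0, p) in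
  (exists2 mg, mg \in (step t p st (Bcast n m0 sn0)).1.2 & mg.1 = x /\ (x, p) \in mg.2) /\
  (x, p) \in saved (step t p st (Bcast n m0 sn0)).1.1.
Proof.
move=> x /=; split; last exact: add_sigE.
exists (m0, sn0, p, sigs_for (add_sig (m0, sn0, p, p) (saved st)) (m0, sn0, p)); first by rewrite inE.
by split => //=; rewrite mem_filter add_sigE eqxx.
Qed.


Definition rv evs : seq (msg M n) := pmap (fun e => if e is Recv mg then Some mg else None) evs.
Definition bc evs : seq (M * nat) := pmap (fun e => if e is Bcast m s then Some (m, s) else None) evs.
Lemma rv_head mg evs : mg \in rv (Recv mg :: evs).
Proof. by rewrite /rv /= mem_head. Qed.
Lemma rv_tail mg e evs : mg \in rv evs -> mg \in rv (e :: evs).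
Proof. by case: e => [mg'|m0 k0] H; rewrite /rv /= ?inE ?H ?orbT. Qed.
Lemma bc_head m0 k0 evs : (m0, k0) \in bc (Bcast n m0 k0 :: evs).
Proof. by rewrite /bc /= mem_head. Qed.
Lemma bc_tail ms e evs : ms \in bc evs -> ms \in bc (e :: evs).
Proof. by case: e => [mg'|m0 k0] H; rewrite /bc /= ?inE ?H ?orbT. Qed.
Lemma rv_cons mg e evs : mg \in rv (e :: evs) -> e = Recv mg \/ mg \in rv evs.
Proof. by case: e => [mg'|m0 k0]; rewrite /rv /= ?inE; [case/orP => [/eqP ->|]|]; auto. Qed.
Lemma bc_cons ms e evs : ms \in bc (e :: evs) -> e = Bcast n ms.1 ms.2 \/ ms \in bc evs.
Proof. by case: ms => a b; case: e => [mg'|m0 k0]; rewrite /bc /= ?inE; [|case/orP => [/eqP [-> ->]|]]; auto. Qed.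

Lemma run_saved_sub p st evs : {subset saved st <= saved (run t p st evs).1.1}.
Proof.
elim: evs st => [|e es IH] st; first by [].
rewrite run_cons /= => z Hz.
by apply: IH; apply: step_saved_sub.
Qed.
Lemma run_signed_sub p st evs : {subset signed st <= signed (run t p st evs).1.1}.
Proof.
elim: evs st => [|e es IH] st; first by [].
rewrite run_cons /= => z Hz.
by apply: IH; apply: step_signed_sub.
Qed.
Lemma run_deliv p st evs : delivered (run t p st evs).1.1 = delivered st ++ (run t p st evs).2.
Proof.
elim: evs st => [|e es IH] st; first by rewrite /= cats0.
by rewrite run_cons /= IH step_deliv catA.
Qed.
Lemma run_dels p st evs y : y \in (run t p st evs).2 ->
  exists mg, [/\ mg \in rv evs, mg.1 = y & (y, y.2) \in mg.2].
Proof.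
elim: evs st => [|e es IH] st; first by [].
rewrite run_cons /= mem_cat => /orP [].
  by case/step_dels => mg [-> H1 H2]; exists mg; split => //; apply: rv_head.
by case/IH => mg [H1 H2 H3]; exists mg; split => //; apply: rv_tail.
Qed.
Lemma run_outs p st evs mg : mg \in (run t p st evs).1.2 -> {subset mg.2 <= saved (run t p st evs).1.1}.
Proof.
elim: evs st => [|e es IH] st; first by [].
rewrite run_cons /= mem_cat => /orP [].
  by move=> /step_outs H z /H; apply: run_saved_sub.
by move/IH.
Qed.
Lemma run_saved_new p st evs s : s \in saved (run t p st evs).1.1 ->
  s \in saved st \/ (exists mg, [/\ mg \in rv evs, mg.1 = s.1 & (s.1, s.1.2) \in mg.2]) \/
  (s.1.2 = p /\ (s.1.1.1, s.1.1.2) \in bc evs).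
Proof.
elim: evs st => [|e es IH] st; first by left.
rewrite run_cons /= => /IH [|[[mg [H1 H2 H3]] | [H1 H2]]].
- case/step_saved_new => [|[[mg [H1 H2 H3]] | [H1 H2]]]; first by left.
    by right; left; exists mg; split => //; rewrite H1; apply: rv_head.
  by right; right; split => //; rewrite H2; apply: bc_head.
- by right; left; exists mg; split => //; apply: rv_tail.
- by right; right; split => //; apply: bc_tail.
Qed.
Lemma run_signed_new p st evs sn' j : (sn', j) \in signed (run t p st evs).1.1 ->
  (sn', j) \in signed st \/ (exists mg, [/\ mg \in rv evs, mg.1.1.2 = sn', mg.1.2 = j & (mg.1, j) \in mg.2]) \/
  (j = p /\ exists m', (m', sn') \in bc evs).
Proof.
elim: evs st => [|e es IH] st; first by left.
rewrite run_cons /= => /IH [|[[mg [H1 H2 H3 H4]] | [H1 [m' H2]]]].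
- case/step_signed_new => [|[[mg [H1 H2 H3 H4]] | [H1 [m' H2]]]]; first by left.
    by right; left; exists mg; split => //; rewrite H1; apply: rv_head.
  by right; right; split => //; exists m'; rewrite H2; apply: bc_head.
- by right; left; exists mg; split => //; apply: rv_tail.
- by right; right; split => //; exists m'; apply: bc_tail.
Qed.
Lemma run_bcast p st evs m0 sn0 : (m0, sn0) \in bc evs ->
  let x := (m0, sn0, p) in
  (exists2 mg, mg \in (run t p st evs).1.2 & mg.1 = x /\ (x, p) \in mg.2) /\
  (x, p) \in saved (run t p st evs).1.1.
Proof.
elim: evs st => [|e es IH] st; first by [].
rewrite run_cons => /bc_cons [-> | /IH H].
  case: (step_bcast p st m0 sn0) => [[mg Hmg H1] H2]; split.
    by exists mg => //; rewrite mem_cat Hmg.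
  exact: run_saved_sub.
case: (H (step t p st e).1.1) => [[mg Hmg H1] H2]; split => //.
by exists mg => //; rewrite mem_cat Hmg orbT.
Qed.
End Gen.
Section Spec.
Variable M : eqType.
Variable n t : nat.
Variables (i : 'I_n) (m : M) (sn : nat).
Local Notation x := (m, sn, i).
Local Notation T := ((n + t) %/ 2).
Implicit Types (p : 'I_n) (s z : sig M n) (l : seq (sig M n)) (st : lstate M n) (e : event M n) (mg : msg M n) (evs : seq (event M n)).

Definition hasD (l : seq (triplet M n)) := has (fun y : triplet M n => (y.1.2 == sn) && (y.2 == i)) l.
Definition isrel e := if e is Recv mg then (mg.1.1.2 == sn) && (mg.1.2 == i) && ((mg.1, i) \in mg.2) else false.
Definition irr (p : 'I_n) e := match e with Recv mg => ~~ isrel e | Bcast m0 sn0 => (p != i) || (sn0 != sn) end.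
Definition relv mg := (mg.1 == x) && ((x, i) \in mg.2).

Lemma sigs_for_add s l : s.1 != x -> sigs_for (add_sig s l) x = sigs_for l x.
Proof. by move=> H; rewrite /add_sig; case: ifP => // _; rewrite /sigs_for filter_rcons (negbTE H). Qed.
Lemma sigs_for_nil l : {in l, forall s, s.1 != x} -> sigs_for l x = [::].
Proof.
move=> H; apply/eqP; rewrite -[_ == _]negbK -has_filter; apply/hasPn => s Hs /=.
exact: H.
Qed.

Lemma step_irr p st e : irr p e ->
  [/\ sigs_for (saved (step t p st e).1.1) x = sigs_for (saved st) x,
      ((sn, i) \in signed (step t p st e).1.1) = ((sn, i) \in signed st),
      hasD (delivered (step t p st e).1.1) = hasD (delivered st) &
      x \notin (step t p st e).2].
Proof.
case: e => [mg | m0 sn0].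
  rewrite [X in X -> _]/= => Hir; rewrite step_recv; case: ifP => [/andP [_ Ha]|_] //.
  have K : ~~ ((mg.1.1.2 == sn) && (mg.1.2 == i)).
    apply: contra Hir => /andP [H1 H2]; rewrite H1 (eqP H2) eqxx /=.
    by move: Ha; rewrite (eqP H2).
  have Kx : mg.1 != x.
    by apply: contra K => /eqP ->; rewrite !eqxx.
  split => /=.
  - rewrite /sv2; have E : sigs_for (sv1 st mg) x = sigs_for (saved st) x.
      rewrite /sv1 /sigs_for filter_cat -[X in _ ++ X]/(sigs_for _ x).
      rewrite sigs_for_nil ?cats0 // => s.
      by rewrite mem_undup mem_filter => /andP [/andP [/eqP -> _] _].
    by case: ifP => _ //; rewrite sigs_for_add.
  - case: ifP => _ //; rewrite in_cons.
    suff -> : ((sn, i) == (mg.1.1.2, mg.1.2)) = false by [].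
    by apply/negbTE; apply: contra K; rewrite xpair_eqE => /andP [/eqP -> /eqP ->]; rewrite !eqxx.
  - case: ifP => _ //; rewrite /hasD has_rcons.
    by rewrite (negbTE K).
  - case: ifP => _ //; by rewrite inE eq_sym.
rewrite [X in X -> _]/= => Hb; split => //=.
- rewrite sigs_for_add //=; apply/negP => /eqP [_ E1 E2]; move: Hb; by rewrite E1 E2 !eqxx.
- rewrite in_cons; case: eqP => [[E1 E2]|//]; move: Hb; by rewrite E1 E2 !eqxx.
Qed.


Lemma relv_isrel mg : relv mg -> isrel (Recv mg).
Proof. by case/andP => /eqP E H; rewrite /= E !eqxx H. Qed.

Lemma step_rel p st mg : relv mg -> ~~ hasD (delivered st) -> acc st mg.
Proof.
case/andP => /eqP E H HD; rewrite /acc E H andbT.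
exact: HD.
Qed.

Lemma thrE p st mg : (thr t p st mg) = (T < size (sigs_for (sv2 p st mg) mg.1)).
Proof. rewrite /thr; apply/idP/idP; lia. Qed.

Lemma sv2_relv p st mg : relv mg -> ((sn, i) \in signed st -> (x, p) \in saved st) ->
  [/\ {subset sigs_for mg.2 x <= sv2 p st mg}, (x, p) \in sv2 p st mg & (x, i) \in sv2 p st mg].
Proof.
case/andP => /eqP E Hi H2.
have S1 : {subset sigs_for mg.2 x <= sv2 p st mg}.
  move=> z; rewrite mem_filter => /andP [Hz1 Hz2].
  have : z \in sv1 st mg.
    rewrite /sv1 mem_cat mem_undup mem_filter Hz2 E Hz1 /=.
    by case: (z \in saved st).
  rewrite /sv2; case: ifP => _ // Hz; exact: add_sig_sub.
split => //; last by apply: S1; rewrite mem_filter eqxx.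
rewrite /sv2 /alr E /=; case: ifP => Hs; first by apply: sv1_sub; apply: H2.
exact: add_sigE.
Qed.

Lemma run_count p st evs :
  ~~ hasD (delivered st) ->
  ((sn, i) \in signed st -> (x, p) \in saved st) ->
  (forall mg, mg \in rv evs -> mg.1.1.2 = sn -> mg.1.2 = i -> (mg.1, i) \in mg.2 -> mg.1 = x) ->
  (forall ms, ms \in bc evs -> p = i -> ms.2 <> sn) ->
  x \in (run t p st evs).2 \/
  [/\ ~~ hasD (delivered (run t p st evs).1.1),
      ((sn, i) \in signed (run t p st evs).1.1 -> (x, p) \in saved (run t p st evs).1.1),
      (forall mg, mg \in rv evs -> relv mg ->
         [/\ {subset sigs_for mg.2 x <= saved (run t p st evs).1.1},
             (x, p) \in saved (run t p st evs).1.1 &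
             size (sigs_for (saved (run t p st evs).1.1) x) <= T]) &
      (~~ has relv (rv evs) -> sigs_for (saved (run t p st evs).1.1) x = sigs_for (saved st) x)].
Proof.
elim: evs st => [|e es IH] st H1 H2 H3 H4.
  by right; split => //.
have H3' : forall mg, mg \in rv es -> mg.1.1.2 = sn -> mg.1.2 = i -> (mg.1, i) \in mg.2 -> mg.1 = x.
  by move=> mg Hm; apply: H3; apply: rv_tail.
have H4' : forall ms, ms \in bc es -> p = i -> ms.2 <> sn.
  by move=> ms Hm; apply: H4; apply: bc_tail.
rewrite run_cons /=.
case Hrel : (isrel e).
  case: e Hrel H3 H4 => [mg|m0 sn0] // Hrel H3 H4.
  have {Hrel}Hrel : (mg.1.1.2 == sn) && (mg.1.2 == i) && ((mg.1, i) \in mg.2) := Hrel.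
  have Hmx : mg.1 = x.
    by case/andP: Hrel => /andP [/eqP A /eqP B] C; apply: H3 => //; apply: rv_head.
  have Hrv : relv mg by move: Hrel; rewrite /relv Hmx eqxx /= => /andP [_ ->].
  case: (sv2_relv Hrv H2) => S1 S2 S3.
  rewrite step_recv (step_rel p Hrv H1) /=.
  case: ifP => Hth /=.
    by left; rewrite Hmx mem_head.
  set st1 := LState _ _ _.
  have H1' : ~~ hasD (delivered st1) by [].
  have H2' : (sn, i) \in signed st1 -> (x, p) \in saved st1 by [].
  have Hsz : size (sigs_for (saved st1) x) <= T by move: Hth; rewrite thrE Hmx ltnNge => /negbFE.
  case: (IH st1 H1' H2' H3' H4') => [Hx|[G1 G2 G3 G4]].
    by left.
  right; split => //.
    move=> mg'; rewrite in_cons => /orP [/eqP -> | Hm'] Hr'; last exact: G3.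
    have Ssub := @run_saved_sub _ _ t p st1 es.
    split; [by move=> z /S1 /Ssub | by apply: Ssub |].
    case: (boolP (has relv (rv es))) => [/hasP [mg'' Hm'' Hr'']|Hn].
      by case: (G3 _ Hm'' Hr'').
    by rewrite G4.
  by rewrite /rv /= Hrv.
have Hirr : irr p e.
  case: e Hrel H4 {H3} => [mg|m0 sn0] /=; first by move=> ->.
  move=> _ H4; case: (p =P i) => //= Hp; apply/eqP => E.
  by apply: (H4 (m0, sn0)) => //; apply: bc_head.
case: (step_irr st Hirr) => E1 E2 E3 E4.
set st1 := (step t p st e).1.1.
have H1' : ~~ hasD (delivered st1) by rewrite /st1 E3.
have H2' : (sn, i) \in signed st1 -> (x, p) \in saved st1.
  by rewrite /st1 E2 => /H2; apply: step_saved_sub.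
case: (IH st1 H1' H2' H3' H4') => [Hx|[G1 G2 G3 G4]].
  by left; rewrite mem_cat Hx orbT.
right; split => //.
  move=> mg' Hm' Hr'; apply: G3 => //.
  case/rv_cons: Hm' => // Ee; move: Hrel; rewrite Ee.
  by move: (relv_isrel Hr') => ->.
move=> Hn; rewrite G4 ?E1 //; move: Hn; apply: contra => Hh.
by case Ee: e => [mg|m0 sn0]; rewrite /rv /= -/(rv es) ?Hh ?orbT.
Qed.


Lemma run_sign p st evs mg0 : p != i -> ~~ hasD (delivered st) -> (sn, i) \notin signed st ->
  (forall mg, mg \in rv evs -> mg.1.1.2 = sn -> mg.1.2 = i -> (mg.1, i) \in mg.2 -> mg.1 = x) ->
  mg0 \in rv evs -> relv mg0 ->
  exists2 mg', mg' \in (run t p st evs).1.2 & relv mg' && ((x, p) \in mg'.2).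
Proof.
move=> Hp; elim: evs st => [|e es IH] st H1 H2 H3 //.
have H3' : forall mg, mg \in rv es -> mg.1.1.2 = sn -> mg.1.2 = i -> (mg.1, i) \in mg.2 -> mg.1 = x.
  by move=> mg Hm; apply: H3; apply: rv_tail.
rewrite run_cons.
case Hrel : (isrel e).
  case: e Hrel H3 => [mg|m0 sn0] // Hrel H3 _ _.
  have {Hrel}Hrel : (mg.1.1.2 == sn) && (mg.1.2 == i) && ((mg.1, i) \in mg.2) := Hrel.
  have Hmx : mg.1 = x.
    by case/andP: Hrel => /andP [/eqP A /eqP B] C; apply: H3 => //; apply: rv_head.
  have Hrv : relv mg by move: Hrel; rewrite /relv Hmx eqxx /= => /andP [_ ->].
  have H2' : (sn, i) \in signed st -> (x, p) \in saved st by rewrite (negbTE H2).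
  case: (sv2_relv Hrv H2') => S1 S2 S3.
  have Halr : alr st mg = false by rewrite /alr Hmx (negbTE H2).
  exists (mg.1, sigs_for (sv2 p st mg) mg.1).
    by rewrite step_recv (step_rel p Hrv H1) Halr /= mem_head.
  by rewrite /relv /= Hmx /sigs_for !mem_filter !eqxx S2 S3.
have Hirr : irr p e by case: e Hrel {H3} => [mg|m0 sn0] /=; [move=> -> | rewrite Hp].
case: (step_irr st Hirr) => E1 E2 E3 E4.
move=> Hm0 Hr0.
have Hm0' : mg0 \in rv es.
  case/rv_cons: Hm0 => // Ee; move: Hrel; rewrite Ee.
  by move: (relv_isrel Hr0) => ->.
case: (IH (step t p st e).1.1) => //; first by rewrite E3.
  by rewrite E2.
by move=> mg' Hm' Hr'; exists mg' => //; rewrite mem_cat Hm' orbT.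
Qed.

End Spec.

Lemma uniq_snd_inj (A B : eqType) (l : seq (A * B)) a1 a2 b :
  uniq (map snd l) -> (a1, b) \in l -> (a2, b) \in l -> a1 = a2.
Proof.
elim: l => [|[a b'] l IH] //= /andP [Hn Hu].
rewrite !in_cons => /orP [/eqP [E1 E2] | H1] /orP [/eqP [E3 E4] | H2].
- by rewrite E1 E3.
- by move: Hn; rewrite -E2 => /negP []; exact: (map_f snd H2).
- by move: Hn; rewrite -E4 => /negP []; exact: (map_f snd H1).
- exact: IH.
Qed.

Lemma sum_boolE (T : finType) (A : {set T}) (P : pred T) :
  \sum_(j in A) (P j : nat) = #|[set j in A | P j]|.
Proof.
rewrite -sum1_card big_mkcond /= [RHS]big_mkcond /=; apply: eq_bigr => j _.
by rewrite !inE; case: (j \in A); case: (P j).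
Qed.

Lemma arith1 a b c T' : true + a <= T' -> b + a + 1 <= b + c + T'.
Proof. rewrite /=; lia. Qed.

Lemma arith2 c d T s f : T < c - d -> c <= s + d -> f * (s - T) <= d * s ->
  c - d - (d * T) %/ (c - d - T) <= c - f.
Proof.
move=> H1 H2 H3.
have Hs : 0 < s - T by lia.
have H4 : f <= d + (d * T) %/ (s - T).
  have E : d * s = d * (s - T) + d * T by rewrite -mulnDr subnK //; lia.
  by rewrite -(divnMDl _ _ Hs) -E leq_divRL.
have H5 : (d * T) %/ (s - T) <= (d * T) %/ (c - d - T) by apply: leq_div2l; lia.
lia.
Qed.

Section Global.
Variables (M : eqType) (n t d : nat) (C : {set 'I_n}) (inp : inputs M n) (byz : byz_sends M n)
  (supp : suppression n) (i : 'I_n) (m : M) (sn tau0 : nat).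
Hypothesis Hex : execution t C d inp byz supp.
Hypothesis HiC : i \in C.
Hypothesis Hb0 : (m, sn) \in bcasts inp i tau0.
Local Notation x := (m, sn, i).
Local Notation T := ((n + t) %/ 2).
Local Notation stt p tau := (state_at t inp p tau).
Implicit Types (p q : 'I_n) (s z : sig M n) (mg : msg M n).

Lemma stS p tau : stt p tau.+1 = (run t p (stt p tau) (inp p tau)).1.1.
Proof. by []. Qed.

Lemma rvE q tau : rv (inp q tau) = recvs inp q tau.
Proof. by []. Qed.
Lemma bcE q tau : bc (inp q tau) = bcasts inp q tau.
Proof. by []. Qed.

Lemma recvs_sent q tau mg : q \in C -> mg \in recvs inp q tau.+1 ->
  mg \in sent_to t C inp byz supp q tau.
Proof. by case: Hex => _ _ Hp _ _ Hq; rewrite (perm_mem (Hp q tau Hq)). Qed.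

Lemma sent_src q tau mg : mg \in sent_to t C inp byz supp q tau ->
  (exists2 p, p \in C & mg \in outs t inp p tau) \/ (exists2 b, b \notin C & mg \in byz tau b q).
Proof.
rewrite /sent_to => /flatten_mapP [p _]; case: ifP => Hp H; last by right; exists p; rewrite ?Hp.
left; exists p => //; move: H => /mapP [km]; rewrite mem_filter => /andP [_ Hkm] ->.
have := map_f snd Hkm; rewrite -/(unzip2 _) unzip2_zip //.
by rewrite size_iota.
Qed.

Lemma sent_in p q tau k mg0 : p \in C -> k < size (outs t inp p tau) -> q \notin supp p tau k ->
  nth mg0 (outs t inp p tau) k \in sent_to t C inp byz supp q tau.
Proof.
move=> Hp Hk Hq; rewrite /sent_to; apply/flatten_mapP; exists p; first by rewrite mem_enum.
rewrite Hp; apply/mapP; exists (k, nth mg0 (outs t inp p tau) k) => //.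
rewrite mem_filter /= Hq /=.
have <- : nth (0, mg0) (zip (iota 0 (size (outs t inp p tau))) (outs t inp p tau)) k =
          (k, nth mg0 (outs t inp p tau) k).
  by rewrite nth_zip ?size_iota // nth_iota.
by apply: mem_nth; rewrite size_zip size_iota minnn.
Qed.

Lemma recv_in p q tau k mg0 : p \in C -> q \in C -> k < size (outs t inp p tau) -> q \notin supp p tau k ->
  nth mg0 (outs t inp p tau) k \in rv (inp q tau.+1).
Proof.
move=> Hp Hq Hk Hs; case: Hex => _ _ Hperm _ _.
rewrite rvE (perm_mem (Hperm q tau Hq)).
exact: sent_in.
Qed.

Lemma sig_origin q tau mg s : q \in C -> mg \in rv (inp q tau) -> s \in mg.2 -> s.2 \in C ->
  exists tau' p, [/\ tau' <= tau, p \in C & s \in saved (stt p tau')].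
Proof.
move=> Hq; case: tau => [|tau].
  by case: Hex => _ Hr0 _ _ _; rewrite rvE (Hr0 q Hq).
rewrite rvE => /(recvs_sent Hq) /sent_src [[p Hp Hmg] | [b Hb Hmg]] Hs Hs2.
  exists tau.+1, p; split => //.
  exact: (run_outs Hmg).
case: Hex => _ _ _ Hunf _.
case: (Hunf tau b q mg s Hb Hmg Hs Hs2) => tau' [p [mg' [Ht Hp Hmg' Hs']]].
exists tau'.+1, p; split => //; first by apply: leqW.
exact: (run_outs Hmg').
Qed.

Let L p T0 := flatten [seq bcasts inp p tau | tau <- iota 0 T0].
Lemma L_S p T0 : [seq ms.2 | ms <- L p T0.+1] = [seq ms.2 | ms <- L p T0] ++ [seq ms.2 | ms <- bcasts inp p T0].
Proof. by rewrite /L -addn1 iotaD map_cat flatten_cat map_cat /= cats0. Qed.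
Lemma L_in p T0 tau ms : tau < T0 -> ms \in bcasts inp p tau -> ms \in L p T0.
Proof. by move=> Ht Hm; apply/flatten_mapP; exists tau => //; rewrite mem_iota. Qed.

Lemma bc_uniq p tau1 tau2 m1 m2 sq : p \in C ->
  (m1, sq) \in bcasts inp p tau1 -> (m2, sq) \in bcasts inp p tau2 -> tau1 = tau2 /\ m1 = m2.
Proof.
move=> Hp; case: Hex => _ _ _ _ Hu.
have Hlt : forall ta tb ma mb, ta < tb -> (ma, sq) \in bcasts inp p ta -> (mb, sq) \in bcasts inp p tb -> False.
  move=> ta tb ma mb Hab Ha Hb.
  have := Hu p tb.+1 Hp; rewrite L_S cat_uniq => /and3P [_ /hasPn H _].
  have := H sq (map_f snd Hb); rewrite /= (map_f snd (L_in Hab Ha)) //.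
case: (ltngtP tau1 tau2) => [H12|H21|<-] H1 H2.
- by case: (Hlt _ _ _ _ H12 H1 H2).
- by case: (Hlt _ _ _ _ H21 H2 H1).
split => //.
have := Hu p tau1.+1 Hp; rewrite L_S cat_uniq => /and3P [_ _ H].
exact: (uniq_snd_inj H H1 H2).
Qed.


Lemma no_wrong tau p s : p \in C -> s \in saved (stt p tau) -> s.1.2 = i -> s.1.1.2 = sn -> s.1.1.1 = m.
Proof.
suff H : forall tau tau', tau' <= tau -> forall p s, p \in C -> s \in saved (stt p tau') ->
   s.1.2 = i -> s.1.1.2 = sn -> s.1.1.1 = m by apply: (H tau).
elim=> [|k IH] tau' Ht p' s' Hp.
  by move: Ht; rewrite leqn0 => /eqP ->.
case: (leqP tau' k) => [Ht'|Ht']; first by apply: IH.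
have -> : tau' = k.+1 by lia.
rewrite stS => /run_saved_new [Hs | [[mg [Hmg Hm1 Hm2]] | [Hs1 Hbc]]].
- exact: (IH k (leqnn k) p' s' Hp Hs).
- move=> Hi Hsn.
  have Hc : (s'.1, s'.1.2).2 \in C by rewrite /= Hi.
  case: (sig_origin Hp Hmg Hm2 Hc) => tau'' [p'' [H1 H2 H3]].
  exact: (IH tau'' H1 p'' _ H2 H3).
- move=> Hi Hsn; rewrite bcE Hsn in Hbc.
  have Hpi : p' = i by rewrite -Hs1.
  rewrite Hpi in Hbc.
  by case: (bc_uniq HiC Hb0 Hbc).
Qed.

Lemma no_bad_early tau p s : tau <= tau0 -> p \in C -> s \in saved (stt p tau) -> s.1.2 = i -> s.1.1.2 = sn -> False.
Proof.
suff H : forall tau tau', tau' <= tau -> tau <= tau0 -> forall p s, p \in C -> s \in saved (stt p tau') ->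
   s.1.2 = i -> s.1.1.2 = sn -> False by move=> Ht; apply: (H tau).
elim=> [|k IH] tau' Ht Ht0 p' s' Hp.
  by move: Ht; rewrite leqn0 => /eqP ->.
case: (leqP tau' k) => [Ht'|Ht']; first by apply: IH => //; apply: ltnW.
have -> : tau' = k.+1 by lia.
rewrite stS => /run_saved_new [Hs | [[mg [Hmg Hm1 Hm2]] | [Hs1 Hbc]]].
- exact: (IH k (leqnn k) (ltnW Ht0) p' s' Hp Hs).
- move=> Hi Hsn.
  have Hc : (s'.1, s'.1.2).2 \in C by rewrite /= Hi.
  case: (sig_origin Hp Hmg Hm2 Hc) => tau'' [p'' [H1 H2 H3]].
  exact: (IH tau'' H1 (ltnW Ht0) p'' _ H2 H3).
- move=> Hi Hsn; rewrite bcE Hsn in Hbc.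
  have Hpi : p' = i by rewrite -Hs1.
  rewrite Hpi in Hbc.
  case: (bc_uniq HiC Hb0 Hbc) => E _; lia.
Qed.

Lemma no_bad_tau0 p s : p \in C -> p != i -> s \in saved (stt p tau0.+1) -> s.1.2 = i -> s.1.1.2 = sn -> False.
Proof.
move=> Hp Hpi; rewrite stS => /run_saved_new [Hs | [[mg [Hmg Hm1 Hm2]] | [Hs1 Hbc]]].
- exact: (no_bad_early (leqnn tau0) Hp Hs).
- move=> Hi Hsn.
  have Hc : (s.1, s.1.2).2 \in C by rewrite /= Hi.
  case: (sig_origin Hp Hmg Hm2 Hc) => tau'' [p'' [H1 H2 H3]].
  exact: (no_bad_early H1 H2 H3).
- by move=> Hi; move: Hpi; rewrite -Hs1 Hi eqxx.
Qed.

Lemma not_signed tau p : p \in C -> p != i -> tau <= tau0.+1 -> (sn, i) \notin signed (stt p tau).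
Proof.
move=> Hp Hpi; elim: tau => [|tau IH] Ht //.
apply/negP; rewrite stS => /run_signed_new [Hs | [[mg [Hmg H1 H2 H3]] | [Hs [m' Hbc]]]].
- by move: Hs; apply/negP; apply: IH; apply: ltnW.
- have Hc : (mg.1, i).2 \in C by [].
  case: (sig_origin Hp Hmg H3 Hc) => tau'' [p'' [G1 G2 G3]].
  by apply: (no_bad_early _ G2 G3) => //; lia.
- by move: Hpi; rewrite Hs eqxx.
Qed.

Lemma not_deliv tau p : p \in C -> tau <= tau0.+1 -> ~~ hasD i sn (delivered (stt p tau)).
Proof.
move=> Hp; elim: tau => [|tau IH] Ht //.
rewrite stS run_deliv /hasD has_cat negb_or; apply/andP; split; first by apply: IH; apply: ltnW.
apply/hasPn => y /run_dels [mg [Hmg Hy1 Hy2]]; apply/negP => /andP [/eqP E1 /eqP E2].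
have Hc : (y, y.2).2 \in C by rewrite /= E2.
case: (sig_origin Hp Hmg Hy2 Hc) => tau'' [p'' [G1 G2 G3]].
by apply: (no_bad_early _ G2 G3) => //; lia.
Qed.

Lemma rel_x q tau mg : q \in C -> mg \in rv (inp q tau) -> mg.1.1.2 = sn -> mg.1.2 = i -> (mg.1, i) \in mg.2 -> mg.1 = x.
Proof.
move=> Hq Hmg H1 H2 H3.
have Hc : (mg.1, i).2 \in C by [].
case: (sig_origin Hq Hmg H3 Hc) => tau'' [p'' [G1 G2 G3]].
have := no_wrong G2 G3 H2 H1.
by move: H1 H2; case: (mg.1) => [[a b] c] /= -> -> ->.
Qed.

Lemma bc_other tau ms : ms \in bc (inp i tau) -> tau != tau0 -> ms.2 <> sn.
Proof.
case: ms => a b; rewrite bcE => Hbc Ht /= Eb; rewrite Eb in Hbc.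
case: (bc_uniq HiC Hb0 Hbc) => E _; by move: Ht; rewrite E eqxx.
Qed.

Let mg0 : msg M n := (x, [::]).
Let k0 := find (relv i m sn) (outs t inp i tau0).
Let b0 := nth mg0 (outs t inp i tau0) k0.
Let K0 := supp i tau0 k0.
Let goodp p mg := relv i m sn mg && ((x, p) \in mg.2).
Let kp p := find (goodp p) (outs t inp p tau0.+1).
Let S1 := [set p in C | (p \notin K0) && (p != i)].
Let Bq q := [set p | q \in supp p tau0.+1 (kp p)].
Let sigma q := #|S1 :&: Bq q| + (q \in K0).

Lemma b0P : k0 < size (outs t inp i tau0) /\ relv i m sn b0.
Proof.
have Hbc : (m, sn) \in bc (inp i tau0) by rewrite bcE.
case: (run_bcast t i (stt i tau0) Hbc) => [[mg Hmg [E1 E2]] _].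
have Hh : has (relv i m sn) (outs t inp i tau0).
  by apply/hasP; exists mg => //; rewrite /relv E1 eqxx E2.
by split; [rewrite -has_find | apply: nth_find].
Qed.

Lemma i_saved : (x, i) \in saved (stt i tau0.+1).
Proof.
have Hbc : (m, sn) \in bc (inp i tau0) by rewrite bcE.
by case: (run_bcast t i (stt i tau0) Hbc).
Qed.

Lemma S1_sign p : p \in S1 -> kp p < size (outs t inp p tau0.+1) /\
  goodp p (nth mg0 (outs t inp p tau0.+1) (kp p)).
Proof.
rewrite inE => /andP [Hp /andP [HK Hpi]].
case: b0P => Hk Hr.
have Hin : b0 \in rv (inp p tau0.+1) by apply: recv_in.
have H3 := fun mg Hmg => @rel_x p tau0.+1 mg Hp Hmg.
case: (run_sign t Hpi (not_deliv Hp (leqnn _)) (not_signed Hp Hpi (leqnn _)) H3 Hin Hr) => mg' Hm' Hg.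
have Hh : has (goodp p) (outs t inp p tau0.+1) by apply/hasP; exists mg'.
by split; [rewrite -has_find | apply: nth_find].
Qed.

Lemma claim q : q \in C -> (forall k : 'I_3, x \notin dels t inp q (tau0 + k)) ->
  #|S1| + 1 <= sigma q + T.
Proof.
move=> Hq Hnd.
have Hnd1 : x \notin dels t inp q tau0.+1 by have := Hnd (@Ordinal 3 1 isT); rewrite addn1.
have Hnd2 : x \notin dels t inp q tau0.+2 by have := Hnd (@Ordinal 3 2 isT); rewrite addn2.
have H1 := not_deliv Hq (leqnn tau0.+1).
have H2 : (sn, i) \in signed (stt q tau0.+1) -> (x, q) \in saved (stt q tau0.+1).
  case: (q =P i) => [-> _|/eqP Hqi]; first exact: i_saved.
  by move/negP: (not_signed Hq Hqi (leqnn _)).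
have H3 := fun tau mg Hmg => @rel_x q tau mg Hq Hmg.
have H4 : forall tau, tau != tau0 -> forall ms, ms \in bc (inp q tau) -> q = i -> ms.2 <> sn.
  by move=> tau Ht ms Hms Hqi; move: Hms; rewrite Hqi => Hms; apply: (bc_other Hms).
have Ht1 : tau0.+1 != tau0 by rewrite gtn_eqF.
case: (run_count t H1 H2 (H3 _) (H4 tau0.+1 Ht1)) => [Hx|[A1 A2 A3 A4]].
  by move: Hnd1; rewrite /dels Hx.
rewrite -stS in A1 A2 A3 A4.
have Ht2 : tau0.+2 != tau0 by rewrite gtn_eqF // ltnW.
case: (run_count t A1 A2 (H3 _) (H4 tau0.+2 Ht2)) => [Hx|[B1 B2 B3 B4]].
  by move: Hnd2; rewrite /dels Hx.
rewrite -stS in B1 B2 B3 B4.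
set st1 := stt q tau0.+2 in A1 A2 A3 A4 B4 *.
set st2 := stt q tau0.+3 in B1 B2 B3 B4 *.
set A := S1 :\: Bq q.
have HiA : i \notin A by rewrite !inE eqxx !andbF.
have HS1 : #|S1| = #|S1 :&: Bq q| + #|A| by rewrite cardsID.
have F : forall p, p \in A -> p != q -> [/\ (x, p) \in saved st2, (x, q) \in saved st2,
          (x, i) \in saved st2 & size (sigs_for (saved st2) (m, sn, i)) <= T].
  move=> p; rewrite inE => /andP [HnB HpS] Hpq.
  case: (S1_sign HpS) => Hk /andP [Hr Hxp].
  have HpC : p \in C by move: HpS; rewrite inE => /andP [].
  have HnB' : q \notin supp p tau0.+1 (kp p) by move: HnB; rewrite inE.
  have Hin := recv_in mg0 HpC Hq Hk HnB'.
  case: (B3 _ Hin Hr) => Hsub Hxq Hsz.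
  move: Hr => /andP [/eqP E Hxi].
  split => //; apply: Hsub; by rewrite mem_filter eqxx.
case: (boolP ([exists p in A, p != q] || (q \notin K0))) => Hcase; last first.
  move: Hcase; rewrite negb_or => /andP [Hex' /negPn HqK].
  have Hall : forall p, p \in A -> p = q.
    move=> p Hp; case: (p =P q) => // /eqP Hpq.
    have : [exists p in A, p != q] by apply/existsP; exists p; rewrite Hp Hpq.
    by rewrite (negbTE Hex').
  have HA0 : #|A| = 0.
    apply/eqP; rewrite cards_eq0; apply/eqP/setP => p; rewrite in_set0.
    apply/negP => Hp; have Epq := Hall p Hp.
    by move: Hp; rewrite Epq in_setD /S1 inE HqK /= => /and3P [].
  rewrite /sigma HqK HS1 HA0 addn0 -addnA leq_add2l; exact: leq_addr.
have G : [/\ (x, q) \in saved st2, (x, i) \in saved st2 & size (sigs_for (saved st2) (m, sn, i)) <= T].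
  case/orP: Hcase => [/existsP [p /andP [HpA Hpq]] | HqK].
    by case: (F p HpA Hpq).
  case: b0P => Hk Hr.
  have Hin : b0 \in rv (inp q tau0.+1) by apply: recv_in.
  case: (A3 _ Hin Hr) => Hsub Hxq Hsz.
  have Hsub2 := @run_saved_sub _ _ t q st1 (inp q tau0.+2).
  rewrite -stS -/st2 in Hsub2.
  split.
  - exact: Hsub2.
  - apply: Hsub2; apply: Hsub; move: Hr => /andP [_ Hxi]; by rewrite mem_filter eqxx.
  - case: (boolP (has (relv i m sn) (rv (inp q tau0.+2)))) => [/hasP [mg Hmg Hr']|Hn].
      by case: (B3 _ Hmg Hr').
    by rewrite B4.
case: G => Gq Gi Gsz.
have Hin : forall p, p \in i |: A -> (x, p) \in saved st2.
  move=> p; rewrite in_setU1 => /orP [/eqP -> // | HpA].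
  case: (p =P q) => [-> // | /eqP Hpq]; by case: (F p HpA Hpq).
have Hcard : #|i |: A| <= size (sigs_for (saved st2) (m, sn, i)).
  rewrite cardE -(size_map (fun p => (x, p))).
  apply: uniq_leq_size.
    by rewrite map_inj_uniq ?enum_uniq // => a b [].
  move=> z /mapP [p Hp ->]; rewrite mem_filter eqxx /=; apply: Hin.
  by rewrite mem_enum in Hp.
move: Hcard; rewrite cardsU1 HiA /sigma => Hc.
have H5 : true + #|A| <= T := leq_trans Hc Gsz.
move: H5; rewrite HS1; move: #|A| #|S1 :&: Bq q| (nat_of_bool (q \in K0)) ((n + t) %/ 2) => a b c T'.
exact: arith1.
Qed.

Lemma count_main : #|C :\: [set q | [exists k : 'I_3, x \in dels t inp q (tau0 + k)]]| * (#|S1| + 1 - T) <= d * (#|S1| + 1).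
Proof.
set F := C :\: _.
case: Hex => Hsupp _ _ _ _.
have Hc : forall q, q \in F -> #|S1| + 1 - T <= sigma q.
  move=> q; rewrite inE => /andP [Hn Hq]; rewrite leq_subLR (addnC T); apply: claim => // k.
  by move: Hn; rewrite inE negb_exists => /forallP.
rewrite -sum_nat_const.
apply: (@leq_trans (\sum_(q in F) sigma q)); first by apply: leq_sum.
apply: (@leq_trans (\sum_(q in C) sigma q)).
  rewrite [X in _ <= X](big_setID F) /=.
  have -> : C :&: F = F by apply/setIidPr; apply: subsetDl.
  exact: leq_addr.
rewrite big_split /=.
have E1 : \sum_(q in C) #|S1 :&: Bq q| = \sum_(p in S1) \sum_(q in C) (q \in supp p tau0.+1 (kp p) : nat).
  rewrite exchange_big /=; apply: eq_bigr => q _.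
  by rewrite sum_boolE -setIdE.
rewrite E1 mulnDr muln1.
apply: leq_add.
  rewrite mulnC -sum_nat_const; apply: leq_sum => p _.
  rewrite sum_boolE; apply: leq_trans (proj2 (Hsupp p tau0.+1 (kp p))).
  by apply: subset_leq_card; apply/subsetP => q; rewrite inE => /andP [].
rewrite sum_boolE; apply: leq_trans (proj2 (Hsupp i tau0 k0)).
by apply: subset_leq_card; apply/subsetP => q; rewrite inE => /andP [].
Qed.

Lemma final_bound : 3 * t + 2 * d < n -> #|~: C| <= t -> d < #|C| ->
  #|C| - d - (d * ((n + t) %/ 2)) %/ (#|C| - d - (n + t) %/ 2)
    <= #|[set q in C | [exists k : 'I_3, (m, sn, i) \in dels t inp q (tau0 + k)]]|.
Proof.
move=> Hn HC Hd.
case: Hex => Hsupp _ _ _ _.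
have Hcnt := count_main.
set D := [set q | [exists k : 'I_3, x \in dels t inp q (tau0 + k)]] in Hcnt.
rewrite setIdE -/D.
have E : #|C :&: D| = #|C| - #|C :\: D| by rewrite -(cardsID D C) addnK.
rewrite E.
have HK : #|K0| <= d := proj2 (Hsupp i tau0 k0).
have Hcs : #|C| <= #|S1| + 1 + d.
  apply: (@leq_trans #|K0 :|: (i |: S1)|).
    apply: subset_leq_card; apply/subsetP => q Hq.
    rewrite in_setU in_setU1; case: (boolP (q \in K0)) => //= HqK.
    case: (q =P i) => //= /eqP Hqi; by rewrite /S1 inE Hq HqK Hqi.
  apply: leq_trans (leq_card_setU _ _) _.
  rewrite cardsU1; have : (i \notin S1 : nat) <= 1 by case: (i \notin S1).
  move: (i \notin S1 : nat) => b Hb; lia.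
have HnC : #|~: C| + #|C| = n by rewrite addnC cardsC card_ord.
apply: (arith2 _ Hcs Hcnt); lia.
Qed.

End Global.


Unset Implicit Arguments.

Theorem mainTheorem8 (M : eqType) (n t d : nat) (C : {set 'I_n})
    (inp : inputs M n) (byz : byz_sends M n) (supp : suppression n)
    (i : 'I_n) (m : M) (sn tau0 : nat) :
  3 * t + 2 * d < n ->
  #|~: C| <= t ->
  d < #|C| ->
  execution t C d inp byz supp ->
  i \in C ->
  (m, sn) \in bcasts inp i tau0 ->
  #|C| - d - (d * ((n + t) %/ 2)) %/ (#|C| - d - (n + t) %/ 2)
    <= #|[set q in C | [exists k : 'I_3, (m, sn, i) \in dels t inp q (tau0 + k)]]|.
Proof.
move=> Hn HC Hd Hex HiC Hb0.
exact: (final_bound Hex HiC Hb0 Hn HC Hd).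
Qed.
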